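(* For $\ell\in\{0,\dots,N-1\}$ let $$\psi_\ell=\frac1{\sqrt{\|G_\ell\|_1}}\sum_{m\in\mathbb{Z}}G[mN+\ell]\,\phi_{mN+\ell}.$$ Then $\psi_\ell$ are eigenfunctions of $\mathcal{T}_K^N$ with $\mathcal{T}_K^N\psi_\ell=\|G_\ell\|_1\psi_\ell$; they satisfy $\|\psi_\ell\|_{\mathcal{H}}=1$ and $\|\psi_\ell\|=\frac{\|G_\ell\|}{\sqrt{\|G_\ell\|_1}}$; and they are orthogonal in $L^2_\mu$, i.e. $\langle\psi_\ell,\psi_k\rangle=0$ for $k\ne\ell$.
   Context: Let $\mathbb{T}=[-\pi,\pi)$, $j=\sqrt{-1}$, $\phi_k(x)=e^{jkx}$, $\mu$ uniform probability measure on $\mathbb{T}$, $\langle\cdot,\cdot\rangle$ and $\|\cdot\|$ the $L^2_\mu$ inner product and norm. Let $g$ be even, $M>0$, $K(x,x')=g(M((x-x')\bmod\mathbb{T}))$ positive definite with RKHS $\mathcal{H}$ (where $\theta\bmod\mathbb{T}:=((\theta+\pi)\bmod2\pi)-\pi$), $G[k]=\frac1{2\pi}\int_{-\pi}^{\pi}g(M\theta)e^{-jk\theta}d\theta\ge0$, $\sum_kG[k]<\infty$; the RKHS norm is $\|f\|_{\mathcal{H}}^2=\sum_k|\langle f,\phi_k\rangle|^2/G[k]$. For even $N$, grid points $x_i=\frac{2\pi}{N}i-\pi$, $i=0,\dots,N-1$, with invertible kernel matrix. $\mathcal{T}_K^Nf(x)=\frac1N\sum_{i=0}^{N-1}K(x,x_i)f(x_i)$.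 $\|G_\ell\|_1=\sum_m|G[mN+\ell]|$, $\|G_\ell\|^2=\sum_m|G[mN+\ell]|^2$. *)

(* Defs.v *)
From Stdlib Require Import Reals ZArith.
From Coquelicot Require Import Coquelicot.
From mathcomp Require Import all_boot all_algebra.
From mathcomp Require Import Rstruct.

Open Scope R_scope.

(* theta mod T := ((theta + pi) mod 2pi) - pi, a representative in [-pi, pi) *)
Definition modT (t : R) : R :=
  let u := t + PI in
  u - 2 * PI * IZR (Int_part (u / (2 * PI))) - PI.

Definition phi (k : Z) (x : R) : C := (cos (IZR k * x), sin (IZR k * x)).

Definition CInt (f : R -> C) (a b : R) : C :=
  (RInt (fun t => fst (f t)) a b, RInt (fun t => snd (f t)) a b).

(* bi-infinite sums over Z (symmetric partial sums; all sums used below are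
   absolutely convergent under the hypotheses) *)
Definition zsumR (a : Z -> R) : R :=
  a Z0 + Series (fun n => a (Z.of_nat (S n)) + a (Z.opp (Z.of_nat (S n)))).
Definition zsumC (a : Z -> C) : C :=
  (zsumR (fun k => fst (a k)), zsumR (fun k => snd (a k))).

Definition zsummable (a : Z -> R) : Prop :=
  ex_series (fun n => Rabs (a (Z.of_nat n))) /\
  ex_series (fun n => Rabs (a (Z.opp (Z.of_nat n)))).

(* L^2_mu inner product and norm, mu = uniform probability measure on T *)
Definition ip (f h : R -> C) : C :=
  Cmult (RtoC (/ (2 * PI))) (CInt (fun x => Cmult (f x) (Cconj (h x))) (- PI) PI).
Definition L2norm (f : R -> C) : R := sqrt (fst (ip f f)).

Definition Kern (g : R -> R) (M : R) (x x' : R) : R := g (M * modT (x - x')).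

Definition Gcoef (g : R -> R) (M : R) (k : Z) : C :=
  Cmult (RtoC (/ (2 * PI)))
        (CInt (fun t => Cmult (RtoC (g (M * t))) (phi (Z.opp k) t)) (- PI) PI).

Definition pos_def (K : R -> R -> R) : Prop :=
  forall (n : nat) (xs c : nat -> R),
    0 <= sum_f_R0 (fun i => sum_f_R0 (fun j => c i * c j * K (xs i) (xs j)) n) n.

Definition rkhs_norm (g : R -> R) (M : R) (f : R -> C) : R :=
  sqrt (zsumR (fun k => (Cmod (ip f (phi k)))^2 / fst (Gcoef g M k))).

Definition grid (N i : nat) : R := 2 * PI / INR N * INR i - PI.

Definition kmat (g : R -> R) (M : R) (N : nat) : 'M[R]_N :=
  (\matrix_(i < N, j < N) Kern g M (grid N i) (grid N j))%R.

Definition TKN (g : R -> R) (M : R) (N : nat) (f : R -> C) (x : R) : C :=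
  Cmult (RtoC (/ INR N))
    (\big[Cplus/RtoC 0]_(i < N) Cmult (RtoC (Kern g M x (grid N i))) (f (grid N i))).

Definition G1 (g : R -> R) (M : R) (N l : nat) : R :=
  zsumR (fun m => Cmod (Gcoef g M (Z.add (Z.mul m (Z.of_nat N)) (Z.of_nat l)))).
Definition G2 (g : R -> R) (M : R) (N l : nat) : R :=
  sqrt (zsumR (fun m => (Cmod (Gcoef g M (Z.add (Z.mul m (Z.of_nat N)) (Z.of_nat l))))^2)).

Definition psi (g : R -> R) (M : R) (N l : nat) (x : R) : C :=
  Cmult (RtoC (/ sqrt (G1 g M N l)))
    (zsumC (fun m => Cmult (Gcoef g M (Z.add (Z.mul m (Z.of_nat N)) (Z.of_nat l)))
                           (phi (Z.add (Z.mul m (Z.of_nat N)) (Z.of_nat l)) x))).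

(* Main.v *)
Require Import Defs.
From Stdlib Require Import Reals ZArith Lia Lra FunctionalExtensionality.
From Coquelicot Require Import Coquelicot.
Open Scope R_scope.

Definition wz (a : Z -> R) (n : nat) : R :=
  a (Z.of_nat (S n)) + a (Z.opp (Z.of_nat (S n))).

Lemma zsumR_eq a : zsumR a = a 0%Z + Series (wz a).
Proof. reflexivity. Qed.

Lemma norm_R (x : R) : norm x = Rabs x.
Proof. reflexivity. Qed.

Lemma exs_le (a b : nat -> R) : (forall n, Rabs (a n) <= b n) -> ex_series b -> ex_series a.
Proof. intros H Hb. apply (ex_series_le a b); auto. Qed.

Lemma exs_plus (a b : nat -> R) : ex_series a -> ex_series b -> ex_series (fun n => a n + b n).
Proof. intros Ha Hb. apply (ex_series_plus a b Ha Hb). Qed.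

Lemma exs_scal c (a : nat -> R) : ex_series a -> ex_series (fun n => c * a n).
Proof. intros Ha. apply (ex_series_scal_l c a Ha). Qed.

Lemma zs_pos a : zsummable a -> ex_series (fun n => Rabs (a (Z.of_nat (S n)))).
Proof. intros [H1 H2]. apply (proj1 (ex_series_incr_1 _)) in H1. exact H1. Qed.

Lemma zs_neg a : zsummable a -> ex_series (fun n => Rabs (a (Z.opp (Z.of_nat (S n))))).
Proof. intros [H1 H2]. apply (proj1 (ex_series_incr_1 _)) in H2. exact H2. Qed.

Lemma zs_wabs a : zsummable a -> ex_series (fun n => Rabs (a (Z.of_nat (S n))) + Rabs (a (Z.opp (Z.of_nat (S n))))).
Proof. intros H. apply (exs_plus _ _ (zs_pos a H) (zs_neg a H)). Qed.

Lemma zs_ex a : zsummable a -> ex_series (wz a).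
Proof.
  intros H. apply ex_series_Rabs.
  apply exs_le with (2 := zs_wabs a H).
  intros n. try rewrite Rabs_Rabsolu.  unfold wz. apply Rabs_triang.
Qed.

Lemma zsummable_le a b : (forall k, Rabs (a k) <= b k) -> zsummable b -> zsummable a.
Proof.
  intros Hab [H1 H2]. split.
  - apply exs_le with (2 := H1). intros n. try rewrite Rabs_Rabsolu. 
    eapply Rle_trans; [apply Hab| apply Rle_abs].
  - apply exs_le with (2 := H2). intros n. try rewrite Rabs_Rabsolu. 
    eapply Rle_trans; [apply Hab| apply Rle_abs].
Qed.

Lemma zsummable_plus a b : zsummable a -> zsummable b -> zsummable (fun k => a k + b k).
Proof.
  intros [H1 H2] [H3 H4]. split.
  - apply exs_le with (2 := exs_plus _ _ H1 H3). intros n. try rewrite Rabs_Rabsolu. 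
    apply Rabs_triang.
  - apply exs_le with (2 := exs_plus _ _ H2 H4). intros n. try rewrite Rabs_Rabsolu. 
    apply Rabs_triang.
Qed.

Lemma zsummable_scal c a : zsummable a -> zsummable (fun k => c * a k).
Proof.
  intros [H1 H2]. split.
  - apply exs_le with (2 := exs_scal (Rabs c) _ H1). intros n. try rewrite Rabs_Rabsolu. 
    rewrite Rabs_mult. apply Rle_refl.
  - apply exs_le with (2 := exs_scal (Rabs c) _ H2). intros n. try rewrite Rabs_Rabsolu. 
    rewrite Rabs_mult. apply Rle_refl.
Qed.

Lemma zsummable_abs a : zsummable a -> zsummable (fun k => Rabs (a k)).
Proof. intros [H1 H2]. split; [apply exs_le with (2 := H1)|apply exs_le with (2 := H2)];
  intros n; rewrite !Rabs_Rabsolu; lra. Qed.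

Lemma zsumR_ext a b : (forall k, a k = b k) -> zsumR a = zsumR b.
Proof. intros H. replace a with b; [reflexivity|]. symmetry. apply functional_extensionality. exact H. Qed.

Lemma zsumR_scal c a : zsumR (fun k => c * a k) = c * zsumR a.
Proof.
  unfold zsumR. rewrite Rmult_plus_distr_l. rewrite <- Series_scal_l. f_equal.
  apply Series_ext. intros n. try rewrite Rabs_Rabsolu. ring.
Qed.

Lemma zsumR_plus a b : zsummable a -> zsummable b -> zsumR (fun k => a k + b k) = zsumR a + zsumR b.
Proof.
  intros Ha Hb. rewrite !zsumR_eq.
  rewrite (Series_ext _ (fun n => wz a n + wz b n)).
  - rewrite Series_plus; [ring| apply zs_ex; auto | apply zs_ex; auto].
  - intros n. try rewrite Rabs_Rabsolu. unfold wz. ring.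
Qed.

Lemma zsumR_minus a b : zsummable a -> zsummable b -> zsumR (fun k => a k - b k) = zsumR a - zsumR b.
Proof.
  intros Ha Hb. unfold Rminus. rewrite zsumR_plus; auto.
  - rewrite (zsumR_ext (fun k => - b k) (fun k => (-1) * b k)); [|intros; ring]. rewrite zsumR_scal. ring.
  - apply zsummable_le with (2 := zsummable_abs _ Hb). intros k. rewrite Rabs_Ropp. lra.
Qed.

Lemma zsumR_abs_le a b : (forall k, Rabs (a k) <= b k) -> zsummable b -> Rabs (zsumR a) <= zsumR b.
Proof.
  intros Hab Hb. assert (Ha : zsummable a) by (apply zsummable_le with b; auto).
  unfold zsumR. eapply Rle_trans; [apply Rabs_triang|]. apply Rplus_le_compat; [apply Hab|].
  eapply Rle_trans; [apply Series_Rabs|].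
  - apply exs_le with (2 := zs_wabs a Ha). intros n. try rewrite Rabs_Rabsolu.  unfold wz. apply Rabs_triang.
  - apply Series_le; [|apply zs_ex; auto]. intros n. try rewrite Rabs_Rabsolu. split; [apply Rabs_pos|].
    unfold wz. eapply Rle_trans; [apply Rabs_triang|]. apply Rplus_le_compat; apply Hab.
Qed.

Lemma zsumR_zero : zsumR (fun _ => 0) = 0.
Proof. rewrite (zsumR_ext _ (fun k => 0 * 0)); [|intros; ring]. rewrite zsumR_scal. ring. Qed.

Lemma Series_zero : Series (fun _ => 0) = 0.
Proof. rewrite (Series_ext _ (fun n => 0 * 0)); [|intros; ring]. rewrite Series_scal_l. ring. Qed.

Ltac toR := match goal with |- ?a = ?b => change (@eq R a b) end.

Lemma sum_n_single (u : nat -> R) n0 : (forall n, n <> n0 -> u n = 0) ->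
  forall n, sum_n u n = if Nat.leb n0 n then u n0 else 0.
Proof.
  intros Hu n. induction n.
  - rewrite sum_O. destruct n0; simpl; [reflexivity|]. apply Hu. lia.
  - rewrite sum_Sn. change (plus ?x ?y) with (x + y). rewrite IHn.
    destruct (Nat.eq_dec (S n) n0) as [E|E].
    + subst. rewrite (proj2 (Nat.leb_gt (S n) n) ltac:(lia)). rewrite Nat.leb_refl. toR. ring.
    + rewrite (Hu (S n) E). destruct (Nat.leb n0 n) eqn:E1; destruct (Nat.leb n0 (S n)) eqn:E2;
      toR; try ring; apply Nat.leb_le in E1 || apply Nat.leb_gt in E1;
      apply Nat.leb_le in E2 || apply Nat.leb_gt in E2; lia.
Qed.

Lemma is_series_single (u : nat -> R) n0 : (forall n, n <> n0 -> u n = 0) -> is_series u (u n0).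
Proof.
  intros Hu. change (is_lim_seq (sum_n u) (u n0)).
  apply is_lim_seq_ext_loc with (u := fun _ => u n0); [|apply is_lim_seq_const].
  exists n0. intros n Hn. rewrite (sum_n_single u n0 Hu n).
  rewrite (proj2 (Nat.leb_le n0 n) Hn). reflexivity.
Qed.

Lemma zsumR_single a k0 : (forall k, k <> k0 -> a k = 0) -> zsumR a = a k0.
Proof.
  intros Ha. rewrite zsumR_eq. destruct k0 as [|p|p].
  - rewrite (Series_ext _ (fun _ => 0)). rewrite Series_zero. ring.
    intros n. unfold wz. rewrite !Ha; [ring|lia|lia].
  - rewrite (Ha 0%Z) by lia.
    set (n0 := (Pos.to_nat p - 1)%nat).
    assert (E : Z.of_nat (S n0) = Z.pos p) by lia.
    assert (Hz : forall n, n <> n0 -> wz a n = 0).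
    { intros n Hn. unfold wz. rewrite !Ha; [ring|lia|lia]. }
    rewrite (is_series_unique _ _ (is_series_single (wz a) n0 Hz)).
    unfold wz. rewrite E. rewrite (Ha (- Z.pos p)%Z) by lia. ring.
  - rewrite (Ha 0%Z) by lia.
    set (n0 := (Pos.to_nat p - 1)%nat).
    assert (E : Z.opp (Z.of_nat (S n0)) = Z.neg p) by lia.
    assert (Hz : forall n, n <> n0 -> wz a n = 0).
    { intros n Hn. unfold wz. rewrite !Ha; [ring|lia|lia]. }
    rewrite (is_series_unique _ _ (is_series_single (wz a) n0 Hz)).
    unfold wz. rewrite E. rewrite (Ha (Z.of_nat (S n0))) by lia. ring.
Qed.

Lemma zsumR_split (a : Z -> R) (A B : R) : is_series (fun n => a (Z.of_nat n)) A ->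
  is_series (fun n => a (Z.opp (Z.of_nat (S n)))) B -> zsumR a = A + B.
Proof.
  intros HA HB. rewrite zsumR_eq.
  assert (HA' : is_series (fun n => a (Z.of_nat (S n))) (A - a 0%Z)).
  { apply (is_series_incr_1 (fun n => a (Z.of_nat n))).
    match goal with |- is_series _ ?l => replace l with A; [exact HA|] end.
    change (A = A - a 0%Z + a 0%Z); ring. }
  pose proof (is_series_plus _ _ _ _ HA' HB) as H.
  rewrite (is_series_unique (wz a) (A - a 0%Z + B)); [ring|].
  exact H.
Qed.

Lemma zsumR_nonneg a : (forall k, 0 <= a k) -> zsummable a -> 0 <= zsumR a.
Proof.
  intros Ha Hs. rewrite zsumR_eq.
  apply Rplus_le_le_0_compat; [apply Ha|].
  assert (H0 : Series (fun _ => 0) <= Series (wz a)).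
  { apply Series_le; [|apply zs_ex; auto]. intros n. unfold wz. split; [lra|].
    generalize (Ha (Z.of_nat (S n))) (Ha (- Z.of_nat (S n))%Z). lra. }
  rewrite Series_zero in H0. exact H0.
Qed.

Lemma term_le_Series (u : nat -> R) m : (forall n, 0 <= u n) -> ex_series u -> u m <= Series u.
Proof.
  intros Hu He. rewrite (Series_incr_n u (S m) ltac:(lia) He). simpl.
  assert (H1 : u m <= sum_f_R0 u m).
  { destruct m; simpl; [lra|]. generalize (cond_pos_sum u m Hu). lra. }
  assert (H2 : 0 <= Series (fun k => u (S (m + k)))).
  { assert (H0 : Series (fun _ => 0) <= Series (fun k => u (S (m + k)))).
    { apply Series_le.
      - intros; split; [lra|apply Hu].
      - apply (ex_series_incr_n u (S m)). exact He. }
    rewrite Series_zero in H0. exact H0. }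
  lra.
Qed.

Lemma zsummable_bound a : zsummable a -> exists B, forall k, Rabs (a k) <= B.
Proof.
  intros [H1 H2].
  exists (Series (fun n => Rabs (a (Z.of_nat n))) + Series (fun n => Rabs (a (Z.opp (Z.of_nat n))))).
  assert (P1 := term_le_Series (fun n => Rabs (a (Z.of_nat n)))).
  assert (P2 := term_le_Series (fun n => Rabs (a (Z.opp (Z.of_nat n))))).
  assert (Q1 : 0 <= Series (fun n => Rabs (a (Z.of_nat n)))).
  { eapply Rle_trans; [apply Rabs_pos|]. apply (P1 0%nat); auto. intros; apply Rabs_pos. }
  assert (Q2 : 0 <= Series (fun n => Rabs (a (Z.opp (Z.of_nat n))))).
  { eapply Rle_trans; [apply Rabs_pos|]. apply (P2 0%nat); auto. intros; apply Rabs_pos. }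
  intros k. destruct (Z_le_gt_dec 0 k).
  - replace k with (Z.of_nat (Z.to_nat k)) by lia.
    specialize (P1 (Z.to_nat k) ltac:(intros; apply Rabs_pos) H1). simpl in P1. lra.
  - replace k with (Z.opp (Z.of_nat (Z.to_nat (- k)))) by lia.
    specialize (P2 (Z.to_nat (-k)) ltac:(intros; apply Rabs_pos) H2). simpl in P2. lra.
Qed.

Fixpoint ps (u : nat -> R) (n : nat) : R :=
  match n with O => 0 | S n => ps u n + u n end.

Lemma sum_n_ps u n : sum_n u n = ps u (S n).
Proof.
  induction n.
  - rewrite sum_O. simpl. rewrite Rplus_0_l. reflexivity.
  - rewrite sum_Sn. change (plus ?x ?y) with (x + y). rewrite IHn. reflexivity.
Qed.

Lemma block_inner (N r : nat) (d c : nat -> R) : (r < N)%nat ->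
  (forall q, d (q * N + r)%nat = c q) ->
  (forall q s, (s < N)%nat -> s <> r -> d (q * N + s)%nat = 0) ->
  forall K, ps d (K * N) = ps c K ->
  forall s, (s <= N)%nat -> ps d (K * N + s) = ps c K + (if Nat.ltb r s then c K else 0).
Proof.
  intros Hr Hd Hz K HK s. induction s; intros Hs.
  - rewrite Nat.add_0_r, HK. destruct (Nat.ltb r 0) eqn:E; [apply Nat.ltb_lt in E; lia| ring].
  - rewrite Nat.add_succ_r. simpl. rewrite IHs by lia.
    destruct (Nat.eq_dec s r) as [->|Ne].
    + rewrite Hd. rewrite (proj2 (Nat.ltb_ge r r) ltac:(lia)). rewrite (proj2 (Nat.ltb_lt r (S r)) ltac:(lia)). ring.
    + rewrite (Hz K s ltac:(lia) Ne).
      destruct (Nat.ltb r s) eqn:E1; destruct (Nat.ltb r (S s)) eqn:E2; try ring;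
      (apply Nat.ltb_lt in E1 || apply Nat.ltb_ge in E1);
      (apply Nat.ltb_lt in E2 || apply Nat.ltb_ge in E2); lia.
Qed.

Lemma block (N r : nat) (d c : nat -> R) : (r < N)%nat ->
  (forall q, d (q * N + r)%nat = c q) ->
  (forall q s, (s < N)%nat -> s <> r -> d (q * N + s)%nat = 0) ->
  forall K, ps d (K * N) = ps c K.
Proof.
  intros Hr Hd Hz K. induction K.
  - reflexivity.
  - replace (S K * N)%nat with (K * N + N)%nat by lia.
    rewrite (block_inner N r d c Hr Hd Hz K IHK N ltac:(lia)).
    rewrite (proj2 (Nat.ltb_lt r N) Hr). reflexivity.
Qed.

Lemma nat_reindex (N r : nat) (d c : nat -> R) (L : R) : (r < N)%nat ->
  (forall q, d (q * N + r)%nat = c q) ->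
  (forall q s, (s < N)%nat -> s <> r -> d (q * N + s)%nat = 0) ->
  is_series d L -> is_series c L.
Proof.
  intros Hr Hd Hz HL.
  change (is_lim_seq (sum_n c) L).
  apply is_lim_seq_ext with (u := fun K => sum_n d (S K * N - 1)).
  - intros K. rewrite !sum_n_ps. replace (S (S K * N - 1)) with (S K * N)%nat by lia.
    apply (block N r d c Hr Hd Hz).
  - apply (is_lim_seq_subseq (sum_n d) L (fun K => (S K * N - 1)%nat)); [|exact HL].
    intros P [N0 HP]. exists N0. intros K HK. apply HP. nia.
Qed.

Definition ind (N l : nat) (k : Z) : R :=
  if Z.eqb (Z.modulo (k - Z.of_nat l) (Z.of_nat N)) 0 then 1 else 0.

Lemma ind_one (N l : nat) m : (0 < N)%nat -> ind N l (m * Z.of_nat N + Z.of_nat l)%Z = 1.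
Proof.
  intros HN. unfold ind. replace (m * Z.of_nat N + Z.of_nat l - Z.of_nat l)%Z with (m * Z.of_nat N)%Z by ring.
  rewrite Z.mod_mul by lia. reflexivity.
Qed.

Lemma ind_zero (N l : nat) (q s : Z) : (l < N)%nat -> (0 <= s < Z.of_nat N)%Z -> s <> Z.of_nat l ->
  ind N l (q * Z.of_nat N + s)%Z = 0.
Proof.
  intros Hl Hs Hne. unfold ind.
  replace (q * Z.of_nat N + s - Z.of_nat l)%Z with ((s - Z.of_nat l) + q * Z.of_nat N)%Z by ring.
  rewrite Z.mod_add by lia.
  destruct (Z.eqb_spec ((s - Z.of_nat l) mod Z.of_nat N) 0) as [E|E]; [|reflexivity].
  exfalso. apply Z.mod_divide in E; [|lia]. destruct E as [c Hc]. assert (Z.of_nat l < Z.of_nat N)%Z by lia. destruct (Z.lt_trichotomy c 0) as [Hc0|[Hc0|Hc0]]; [nia|subst; lia|nia].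
Qed.

Lemma ind_01 N l k : ind N l k = 0 \/ ind N l k = 1.
Proof. unfold ind. destruct (Z.eqb _ _); auto. Qed.

Lemma ind_sq N l k : ind N l k * ind N l k = ind N l k.
Proof. destruct (ind_01 N l k) as [-> | ->]; ring. Qed.

Lemma ind_nonneg N l k : 0 <= ind N l k.
Proof. destruct (ind_01 N l k) as [-> | ->]; lra. Qed.

Lemma ind_inv (N l : nat) k : (0 < N)%nat -> ind N l k <> 0 -> exists m, k = (m * Z.of_nat N + Z.of_nat l)%Z.
Proof.
  intros HN. unfold ind. destruct (Z.eqb_spec ((k - Z.of_nat l) mod Z.of_nat N) 0) as [E|E]; [|lra].
  intros _. apply Z.mod_divide in E; [|lia]. destruct E as [c Hc]. exists c. lia.
Qed.

Lemma ind_abs N l k (x : R) : Rabs (ind N l k * x) <= Rabs x.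
Proof. destruct (ind_01 N l k) as [-> | ->]; rewrite ?Rmult_0_l, ?Rmult_1_l, ?Rabs_R0; [apply Rabs_pos|lra]. Qed.

Lemma zreindex_halves (N l : nat) (a : Z -> R) : (0 < N)%nat -> (l < N)%nat -> zsummable a ->
  is_series (fun n => a (Z.of_nat n * Z.of_nat N + Z.of_nat l)%Z)
    (Series (fun n => ind N l (Z.of_nat n) * a (Z.of_nat n))) /\
  is_series (fun n => a (Z.opp (Z.of_nat (S n)) * Z.of_nat N + Z.of_nat l)%Z)
    (Series (fun n => ind N l (Z.opp (Z.of_nat (S n))) * a (Z.opp (Z.of_nat (S n))))).
Proof.
  intros HN Hl Ha. split.
  - apply (nat_reindex N l (fun n => ind N l (Z.of_nat n) * a (Z.of_nat n))); [exact Hl| | |].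
    + intros q. replace (Z.of_nat (q * N + l)) with (Z.of_nat q * Z.of_nat N + Z.of_nat l)%Z by lia.
      rewrite ind_one by exact HN. ring.
    + intros q s Hs Hne. replace (Z.of_nat (q * N + s)) with (Z.of_nat q * Z.of_nat N + Z.of_nat s)%Z by lia.
      rewrite ind_zero; [ring|exact Hl|lia|lia].
    + apply Series_correct. apply exs_le with (2 := proj1 Ha). intros n. apply ind_abs.
  - apply (nat_reindex N (N - 1 - l) (fun n => ind N l (Z.opp (Z.of_nat (S n))) * a (Z.opp (Z.of_nat (S n))))); [lia| | |].
    + intros q. replace (Z.opp (Z.of_nat (S (q * N + (N - 1 - l))))) with (Z.opp (Z.of_nat (S q)) * Z.of_nat N + Z.of_nat l)%Z by lia.
      rewrite ind_one by exact HN. ring.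
    + intros q s Hs Hne. replace (Z.opp (Z.of_nat (S (q * N + s)))) with ((- Z.of_nat q - 1) * Z.of_nat N + (Z.of_nat N - Z.of_nat s - 1))%Z by lia.
      rewrite ind_zero; [ring|exact Hl|lia|lia].
    + apply Series_correct. apply exs_le with (2 := zs_neg _ Ha). intros n. apply ind_abs.
Qed.

Lemma zreindex (N l : nat) (a : Z -> R) : (0 < N)%nat -> (l < N)%nat -> zsummable a ->
  zsumR (fun m => a (m * Z.of_nat N + Z.of_nat l)%Z) = zsumR (fun k => ind N l k * a k).
Proof.
  intros HN Hl Ha. destruct (zreindex_halves N l a HN Hl Ha) as [H1 H2].
  rewrite (zsumR_split _ _ _ H1 H2). symmetry. apply zsumR_split.
  - apply Series_correct. apply exs_le with (2 := proj1 Ha). intros n. apply ind_abs.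
  - apply Series_correct. apply exs_le with (2 := zs_neg _ Ha). intros n. apply ind_abs.
Qed.

Lemma zreindex_summable (N l : nat) (a : Z -> R) : (0 < N)%nat -> (l < N)%nat -> zsummable a ->
  zsummable (fun m => a (m * Z.of_nat N + Z.of_nat l)%Z).
Proof.
  intros HN Hl Ha. destruct (zreindex_halves N l (fun k => Rabs (a k)) HN Hl (zsummable_abs a Ha)) as [H1 H2].
  split.
  - eexists; exact H1.
  - apply (ex_series_incr_1 (fun n => Rabs (a (Z.opp (Z.of_nat n) * Z.of_nat N + Z.of_nat l)%Z))).
    eexists; exact H2.
Qed.

Lemma is_RInt_plusR (f h : R -> R) a b If Ih : is_RInt f a b If -> is_RInt h a b Ih ->
  is_RInt (fun x => f x + h x) a b (If + Ih).
Proof. intros H1 H2. exact (is_RInt_plus f h a b If Ih H1 H2). Qed.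

Lemma is_RInt_scalR (f : R -> R) a b c If : is_RInt f a b If ->
  is_RInt (fun x => c * f x) a b (c * If).
Proof. intros H. exact (is_RInt_scal f a b c If H). Qed.

Lemma RInt_zsum (f : Z -> R -> R) (b v : Z -> R) (a1 a2 : R) :
  zsummable b -> (forall k x, Rabs (f k x) <= b k) -> (forall k, is_RInt (f k) a1 a2 (v k)) ->
  is_RInt (fun x => zsumR (fun k => f k x)) a1 a2 (zsumR v).
Proof.
  intros Hb Hfb Hv.
  set (Pn := fun (n : nat) (x : R) => f 0%Z x + sum_n (fun j => wz (fun k => f k x) j) n).
  set (Vn := fun (n : nat) => v 0%Z + sum_n (wz v) n).
  assert (Hs : forall n, is_RInt (fun x => sum_n (fun j => wz (fun k => f k x) j) n) a1 a2 (sum_n (wz v) n)).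
  { induction n.
    - apply is_RInt_ext with (f := fun x => wz (fun k => f k x) 0%nat).
      + intros x _. rewrite sum_O. reflexivity.
      + rewrite sum_O. unfold wz. apply is_RInt_plusR; apply Hv.
    - apply is_RInt_ext with (f := fun x => sum_n (fun j => wz (fun k => f k x) j) n + wz (fun k => f k x) (S n)).
      + intros x _. rewrite sum_Sn. reflexivity.
      + rewrite sum_Sn. apply is_RInt_plusR; [exact IHn|]. unfold wz. apply is_RInt_plusR; apply Hv. }
  assert (HP : forall n, is_RInt (Pn n) a1 a2 (Vn n)).
  { intros n. unfold Pn, Vn. apply is_RInt_plusR; [apply Hv|apply Hs]. }
  assert (Hex : ex_series (wz b)) by (apply zs_ex; exact Hb).
  assert (HU : filterlim Pn eventually (locally (fun x => zsumR (fun k => f k x)))).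
  { intros Q [eps HQ].
    assert (Hl := Series_correct _ Hex).
    change (is_lim_seq (sum_n (wz b)) (Series (wz b))) in Hl.
    apply is_lim_seq_spec in Hl. destruct (Hl eps) as [N0 HN0].
    exists N0. intros n Hn. apply HQ. intros t.
    change (Rabs (Pn n t - zsumR (fun k => f k t)) < eps).
    assert (Hft : zsummable (fun k => f k t)) by (apply zsummable_le with b; auto).
    assert (Hext := zs_ex _ Hft).
    unfold Pn. rewrite zsumR_eq.
    rewrite (Series_incr_n _ (S n) ltac:(lia) Hext). simpl pred.
    rewrite <- sum_n_Reals.
    assert (E : forall x y z : R, x + y - (x + (y + z)) = - z) by (intros; ring).
    rewrite E, Rabs_Ropp. clear E.
    assert (HexB : ex_series (fun k => wz b (S n + k))) by (apply (ex_series_incr_n (wz b) (S n)); exact Hex).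
    assert (Hbound : forall k, Rabs (wz (fun k0 => f k0 t) (S n + k)) <= wz b (S n + k)).
    { intros k. unfold wz. eapply Rle_trans; [apply Rabs_triang|]. apply Rplus_le_compat; apply Hfb. }
    eapply Rle_lt_trans; [apply Series_Rabs|].
    { apply exs_le with (2 := HexB). intros k. rewrite Rabs_Rabsolu. apply Hbound. }
    eapply Rle_lt_trans; [apply Series_le with (b := fun k => wz b (S n + k))|].
    { intros k. split; [apply Rabs_pos|apply Hbound]. }
    { exact HexB. }
    rewrite (Series_incr_n (wz b) (S n) ltac:(lia) Hex) in HN0. simpl pred in HN0.
    specialize (HN0 n Hn). rewrite sum_n_Reals in HN0.
    assert (Hnn : 0 <= Series (fun k => wz b (S n + k))).
    { assert (H0 : Series (fun _ => 0) <= Series (fun k => wz b (S n + k))).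
      { apply Series_le; [|exact HexB]. intros k. split; [lra|].
        eapply Rle_trans; [apply Rabs_pos|apply Hbound]. }
      rewrite Series_zero in H0. exact H0. }
    rewrite Rabs_minus_sym in HN0.
    replace (sum_f_R0 (wz b) n + Series (fun k => wz b (S n + k)) - sum_f_R0 (wz b) n)
      with (Series (fun k => wz b (S n + k))) in HN0 by ring.
    rewrite Rabs_right in HN0 by lra. exact HN0. }
  destruct (filterlim_RInt Pn a1 a2 eventually eventually_filter _ Vn HP HU) as [If [HIf HRI]].
  replace (zsumR v) with If; [exact HRI|].
  rewrite zsumR_eq.
  assert (Hser : is_series (wz v) (If - v 0%Z)).
  { change (is_lim_seq (sum_n (wz v)) (If - v 0%Z)).
    apply is_lim_seq_ext with (u := fun n => Vn n - v 0%Z).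
    - intros n. unfold Vn. ring.
    - apply is_lim_seq_minus'; [exact HIf| apply is_lim_seq_const]. }
  rewrite (is_series_unique _ _ Hser). unfold Rminus. rewrite (Rplus_comm If), <- Rplus_assoc, Rplus_opp_r, Rplus_0_l. reflexivity.
Qed.

Lemma Rabs_cos_le x : Rabs (cos x) <= 1.
Proof. apply Rabs_le. apply COS_bound. Qed.
Lemma Rabs_sin_le x : Rabs (sin x) <= 1.
Proof. apply Rabs_le. apply SIN_bound. Qed.

Lemma abs_mul_le1 (c u : R) : Rabs u <= 1 -> Rabs (c * u) <= Rabs c.
Proof. intros H. rewrite Rabs_mult. generalize (Rabs_pos c). nra. Qed.

Lemma sin_IZR_PI p : sin (IZR p * PI) = 0.
Proof. apply sin_eq_0_1. exists p. reflexivity. Qed.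

Lemma int_cos (p : Z) : is_RInt (fun x => cos (IZR p * x)) (- PI) PI (if Z.eqb p 0 then 2 * PI else 0).
Proof.
  destruct (Z.eqb_spec p 0) as [->|Hp].
  - apply is_RInt_ext with (f := fun _ => 1).
    + intros x _. rewrite Rmult_0_l, cos_0. reflexivity.
    + simpl. assert (H := is_RInt_const (V := R_NormedModule) (- PI) PI 1).
      match type of H with is_RInt _ _ _ ?v => replace v with (2 * PI) in H end; [exact H|].
      change (2 * PI = (PI - - PI) * 1). ring.
  - assert (Hp' : IZR p <> 0) by (apply not_0_IZR; exact Hp).
    assert (H := is_RInt_derive (fun x => sin (IZR p * x) / IZR p) (fun x => cos (IZR p * x)) (- PI) PI).
    match type of H with _ -> _ -> is_RInt _ _ _ ?v => replace 0 with v end.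
    + apply H.
      * intros x _. auto_derive; auto. field. exact Hp'.
      * intros x _. apply (ex_derive_continuous (fun x0 => cos (IZR p * x0))). auto_derive. auto.
    + change ((sin (IZR p * PI) / IZR p - sin (IZR p * - PI) / IZR p) = 0).
      replace (IZR p * - PI) with (- (IZR p * PI)) by ring. rewrite sin_neg, sin_IZR_PI.
      field. exact Hp'.
Qed.

Lemma int_sin (p : Z) : is_RInt (fun x => sin (IZR p * x)) (- PI) PI 0.
Proof.
  destruct (Z.eqb_spec p 0) as [->|Hp].
  - apply is_RInt_ext with (f := fun _ => 0).
    + intros x _. rewrite Rmult_0_l, sin_0. reflexivity.
    + assert (H := is_RInt_const (V := R_NormedModule) (- PI) PI 0).
      match type of H with is_RInt _ _ _ ?v => replace v with 0 in H end; [exact H|].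
      change (0 = (PI - - PI) * 0). ring.
  - assert (Hp' : IZR p <> 0) by (apply not_0_IZR; exact Hp).
    assert (H := is_RInt_derive (fun x => - cos (IZR p * x) / IZR p) (fun x => sin (IZR p * x)) (- PI) PI).
    match type of H with _ -> _ -> is_RInt _ _ _ ?v => replace 0 with v end.
    + apply H.
      * intros x _. auto_derive; auto. field. exact Hp'.
      * intros x _. apply (ex_derive_continuous (fun x0 => sin (IZR p * x0))). auto_derive. auto.
    + change ((- cos (IZR p * PI) / IZR p - - cos (IZR p * - PI) / IZR p) = 0).
      replace (IZR p * - PI) with (- (IZR p * PI)) by ring. rewrite cos_neg.
      field. exact Hp'.
Qed.

Definition Tr (c : Z -> R) (x : R) : R := zsumR (fun j => c j * cos (IZR j * x)).
Definition Ti (c : Z -> R) (x : R) : R := zsumR (fun j => c j * sin (IZR j * x)).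

Lemma zsummable_cos c x : zsummable c -> zsummable (fun j => c j * cos (IZR j * x)).
Proof. intros H. apply zsummable_le with (2 := zsummable_abs c H). intros; apply abs_mul_le1, Rabs_cos_le. Qed.
Lemma zsummable_sin c x : zsummable c -> zsummable (fun j => c j * sin (IZR j * x)).
Proof. intros H. apply zsummable_le with (2 := zsummable_abs c H). intros; apply abs_mul_le1, Rabs_sin_le. Qed.

Lemma Tr_bound c x : zsummable c -> Rabs (Tr c x) <= zsumR (fun j => Rabs (c j)).
Proof. intros H. apply zsumR_abs_le; [|apply zsummable_abs; auto]. intros; apply abs_mul_le1, Rabs_cos_le. Qed.
Lemma Ti_bound c x : zsummable c -> Rabs (Ti c x) <= zsumR (fun j => Rabs (c j)).
Proof. intros H. apply zsumR_abs_le; [|apply zsummable_abs; auto]. intros; apply abs_mul_le1, Rabs_sin_le. Qed.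

Lemma bound3 a u t D : Rabs u <= 1 -> Rabs t <= D -> Rabs (a * u * t) <= D * Rabs a.
Proof.
  intros Hu Ht. rewrite !Rabs_mult.
  assert (Rabs u * Rabs t <= D) by (generalize (Rabs_pos u) (Rabs_pos t); nra).
  generalize (Rabs_pos a) (Rabs_pos u) (Rabs_pos t). nra.
Qed.

Lemma zsumR_mulr a c : zsumR (fun k => a k * c) = zsumR a * c.
Proof. rewrite (zsumR_ext _ (fun k => c * a k)) by (intros; ring). rewrite zsumR_scal. ring. Qed.

Lemma K1 c k : zsummable c ->
  is_RInt (fun x => Tr c x * cos (IZR k * x) + Ti c x * sin (IZR k * x)) (- PI) PI (2 * PI * c k).
Proof.
  intros Hc.
  apply is_RInt_ext with (f := fun x => zsumR (fun j => c j * cos (IZR (j - k) * x))).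
  - intros x _. unfold Tr, Ti. rewrite <- !zsumR_mulr.
    rewrite <- zsumR_plus.
    + apply zsumR_ext. intros j. rewrite minus_IZR, Rmult_minus_distr_r, cos_minus. ring.
    + apply zsummable_le with (2 := zsummable_abs c Hc). intros j. rewrite Rmult_assoc. apply abs_mul_le1.
      rewrite Rabs_mult. generalize (Rabs_cos_le (IZR j * x)) (Rabs_cos_le (IZR k * x)) (Rabs_pos (cos (IZR j * x))) (Rabs_pos (cos (IZR k * x))). nra.
    + apply zsummable_le with (2 := zsummable_abs c Hc). intros j. rewrite Rmult_assoc. apply abs_mul_le1.
      rewrite Rabs_mult. generalize (Rabs_sin_le (IZR j * x)) (Rabs_sin_le (IZR k * x)) (Rabs_pos (sin (IZR j * x))) (Rabs_pos (sin (IZR k * x))). nra.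
  - replace (2 * PI * c k) with (zsumR (fun j => c j * (if Z.eqb (j - k) 0 then 2 * PI else 0))).
    + apply RInt_zsum with (b := fun j => Rabs (c j)).
      * apply zsummable_abs; auto.
      * intros j x. apply abs_mul_le1, Rabs_cos_le.
      * intros j. apply is_RInt_scalR. apply int_cos.
    + rewrite (zsumR_single _ k).
      * rewrite Z.sub_diag. simpl. ring.
      * intros j Hj. destruct (Z.eqb_spec (j - k) 0); [lia|ring].
Qed.

Lemma K2 c k : zsummable c ->
  is_RInt (fun x => Ti c x * cos (IZR k * x) - Tr c x * sin (IZR k * x)) (- PI) PI 0.
Proof.
  intros Hc.
  apply is_RInt_ext with (f := fun x => zsumR (fun j => c j * sin (IZR (j - k) * x))).
  - intros x _. unfold Tr, Ti. rewrite <- !zsumR_mulr.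
    rewrite <- zsumR_minus.
    + apply zsumR_ext. intros j. rewrite minus_IZR, Rmult_minus_distr_r, sin_minus. ring.
    + apply zsummable_le with (2 := zsummable_abs c Hc). intros j. rewrite Rmult_assoc. apply abs_mul_le1.
      rewrite Rabs_mult. generalize (Rabs_sin_le (IZR j * x)) (Rabs_cos_le (IZR k * x)) (Rabs_pos (sin (IZR j * x))) (Rabs_pos (cos (IZR k * x))). nra.
    + apply zsummable_le with (2 := zsummable_abs c Hc). intros j. rewrite Rmult_assoc. apply abs_mul_le1.
      rewrite Rabs_mult. generalize (Rabs_cos_le (IZR j * x)) (Rabs_sin_le (IZR k * x)) (Rabs_pos (cos (IZR j * x))) (Rabs_pos (sin (IZR k * x))). nra.
  - replace 0 with (zsumR (fun j => c j * 0)).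
    + apply RInt_zsum with (b := fun j => Rabs (c j)).
      * apply zsummable_abs; auto.
      * intros j x. apply abs_mul_le1, Rabs_sin_le.
      * intros j. apply is_RInt_scalR. apply int_sin.
    + rewrite (zsumR_ext _ (fun _ => 0)) by (intros; ring). apply zsumR_zero.
Qed.

Lemma K3 c d : zsummable c -> zsummable d ->
  is_RInt (fun x => Tr c x * Tr d x + Ti c x * Ti d x) (- PI) PI (2 * PI * zsumR (fun j => c j * d j)).
Proof.
  intros Hc Hd. set (D := zsumR (fun j => Rabs (d j))).
  apply is_RInt_ext with (f := fun x => zsumR (fun j => c j * (Tr d x * cos (IZR j * x) + Ti d x * sin (IZR j * x)))).
  - intros x _. symmetry. change (Tr c x * Tr d x + Ti c x * Ti d x) with (zsumR (fun j => c j * cos (IZR j * x)) * Tr d x + zsumR (fun j => c j * sin (IZR j * x)) * Ti d x).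
    rewrite <- !zsumR_mulr.
    rewrite <- zsumR_plus.
    + apply zsumR_ext. intros j. ring.
    + apply zsummable_le with (b := fun j => D * Rabs (c j)); [|apply zsummable_scal, zsummable_abs; exact Hc].
      intros j. apply bound3; [apply Rabs_cos_le|apply Tr_bound; exact Hd].
    + apply zsummable_le with (b := fun j => D * Rabs (c j)); [|apply zsummable_scal, zsummable_abs; exact Hc].
      intros j. apply bound3; [apply Rabs_sin_le|apply Ti_bound; exact Hd].
  - replace (2 * PI * zsumR (fun j => c j * d j)) with (zsumR (fun j => c j * (2 * PI * d j))).
    + apply RInt_zsum with (b := fun j => (2 * D) * Rabs (c j)).
      * apply zsummable_scal, zsummable_abs; exact Hc.
      * intros j x. rewrite Rabs_mult.
        assert (Rabs (Tr d x * cos (IZR j * x) + Ti d x * sin (IZR j * x)) <= 2 * D).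
        { eapply Rle_trans; [apply Rabs_triang|]. rewrite !Rabs_mult.
          generalize (Rabs_cos_le (IZR j * x)) (Tr_bound d x Hd) (Rabs_pos (cos (IZR j * x))) (Rabs_pos (Tr d x)).
          generalize (Rabs_sin_le (IZR j * x)) (Ti_bound d x Hd) (Rabs_pos (sin (IZR j * x))) (Rabs_pos (Ti d x)).
          fold D. nra. }
        generalize (Rabs_pos (c j)). nra.
      * intros j. apply is_RInt_scalR. apply K1; exact Hd.
    + rewrite <- zsumR_scal. apply zsumR_ext. intros; ring.
Qed.

Lemma K4 c d : zsummable c -> zsummable d ->
  is_RInt (fun x => Ti c x * Tr d x - Tr c x * Ti d x) (- PI) PI 0.
Proof.
  intros Hc Hd. set (D := zsumR (fun j => Rabs (d j))).
  apply is_RInt_ext with (f := fun x => zsumR (fun j => (- c j) * (Ti d x * cos (IZR j * x) - Tr d x * sin (IZR j * x)))).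
  - intros x _. symmetry. change (Ti c x * Tr d x - Tr c x * Ti d x) with (zsumR (fun j => c j * sin (IZR j * x)) * Tr d x - zsumR (fun j => c j * cos (IZR j * x)) * Ti d x).
    rewrite <- !zsumR_mulr.
    rewrite <- zsumR_minus.
    + apply zsumR_ext. intros j. ring.
    + apply zsummable_le with (b := fun j => D * Rabs (c j)); [|apply zsummable_scal, zsummable_abs; exact Hc].
      intros j. apply bound3; [apply Rabs_sin_le|apply Tr_bound; exact Hd].
    + apply zsummable_le with (b := fun j => D * Rabs (c j)); [|apply zsummable_scal, zsummable_abs; exact Hc].
      intros j. apply bound3; [apply Rabs_cos_le|apply Ti_bound; exact Hd].
  - replace 0 with (zsumR (fun j => (- c j) * 0)).
    + apply RInt_zsum with (b := fun j => (2 * D) * Rabs (c j)).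
      * apply zsummable_scal, zsummable_abs; exact Hc.
      * intros j x. rewrite Rabs_mult, Rabs_Ropp.
        assert (Rabs (Ti d x * cos (IZR j * x) - Tr d x * sin (IZR j * x)) <= 2 * D).
        { unfold Rminus. eapply Rle_trans; [apply Rabs_triang|]. rewrite Rabs_Ropp, !Rabs_mult.
          generalize (Rabs_cos_le (IZR j * x)) (Tr_bound d x Hd) (Rabs_pos (cos (IZR j * x))) (Rabs_pos (Tr d x)).
          generalize (Rabs_sin_le (IZR j * x)) (Ti_bound d x Hd) (Rabs_pos (sin (IZR j * x))) (Rabs_pos (Ti d x)).
          fold D. nra. }
        generalize (Rabs_pos (c j)). nra.
      * intros j. apply is_RInt_scalR. apply K2; exact Hd.
    + rewrite (zsumR_ext _ (fun _ => 0)) by (intros; ring). apply zsumR_zero.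
Qed.

Lemma period2 (n : Z) : sin (IZR n * (2 * PI)) = 0 /\ cos (IZR n * (2 * PI)) = 1.
Proof.
  assert (Hs : sin (IZR n * PI) = 0) by apply sin_IZR_PI.
  split.
  - replace (IZR n * (2 * PI)) with (IZR (2 * n) * PI) by (rewrite mult_IZR; ring). apply sin_IZR_PI.
  - replace (IZR n * (2 * PI)) with (2 * (IZR n * PI)) by ring. rewrite cos_2a_sin, Hs. ring.
Qed.

Lemma grid_S N i : (0 < N)%nat -> grid N (S i) = grid N i + 2 * PI / INR N.
Proof. intros HN. unfold grid. rewrite S_INR. ring. Qed.

Lemma grid_shift (N h : nat) (m l : Z) i : N = (2 * h)%nat -> (0 < N)%nat ->
  IZR (m * Z.of_nat N + l) * grid N i = IZR l * grid N i + IZR (m * Z.of_nat i - m * Z.of_nat h) * (2 * PI).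
Proof.
  intros Hh HN. unfold grid.
  rewrite plus_IZR, minus_IZR, !mult_IZR, <- !INR_IZR_INZ.
  assert (INR N <> 0) by (apply not_0_INR; lia).
  assert (E : INR N = 2 * INR h) by (rewrite Hh, mult_INR; reflexivity).
  assert (INR h <> 0) by (apply not_0_INR; lia).
  rewrite E. field. exact H0.
Qed.

Lemma trig_shift (N h : nat) (m l : Z) i : N = (2 * h)%nat -> (0 < N)%nat ->
  cos (IZR (m * Z.of_nat N + l) * grid N i) = cos (IZR l * grid N i) /\
  sin (IZR (m * Z.of_nat N + l) * grid N i) = sin (IZR l * grid N i).
Proof.
  intros Hh HN. rewrite (grid_shift N h m l i Hh HN).
  destruct (period2 (m * Z.of_nat i - m * Z.of_nat h)) as [Hs Hc].
  rewrite cos_plus, sin_plus, Hs, Hc. split; ring.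
Qed.

Lemma ps_ext (f h : nat -> R) n : (forall i, f i = h i) -> ps f n = ps h n.
Proof. intros H. induction n; simpl; [reflexivity|]. rewrite IHn, H. reflexivity. Qed.

Lemma ps_plus (f h : nat -> R) n : ps (fun i => f i + h i) n = ps f n + ps h n.
Proof. induction n; simpl; [ring|]. rewrite IHn. ring. Qed.

Lemma ps_scal c (f : nat -> R) n : ps (fun i => c * f i) n = c * ps f n.
Proof. induction n; simpl; [ring|]. rewrite IHn. ring. Qed.

Lemma ps_const c n : ps (fun _ => c) n = INR n * c.
Proof. induction n; [simpl; ring|]. change (ps (fun _ => c) (S n)) with (ps (fun _ => c) n + c). rewrite IHn, S_INR. ring. Qed.

Lemma ps_tele (f : nat -> R) n : ps (fun i => f (S i) - f i) n = f n - f 0%nat.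
Proof. induction n; simpl; [ring|]. rewrite IHn. ring. Qed.

Lemma grid_sums (N h : nat) (p : Z) : N = (2 * h)%nat -> (0 < N)%nat ->
  ps (fun i => cos (IZR p * grid N i)) N = INR N * (if Z.eqb (p mod Z.of_nat N) 0 then 1 else 0) /\
  ps (fun i => sin (IZR p * grid N i)) N = 0.
Proof.
  intros Hh HN.
  assert (HNR : INR N <> 0) by (apply not_0_INR; lia).
  destruct (Z.eqb_spec (p mod Z.of_nat N) 0) as [E|E].
  - apply Z.mod_divide in E; [|lia]. destruct E as [q ->].
    assert (Ht : forall i, cos (IZR (q * Z.of_nat N) * grid N i) = 1 /\ sin (IZR (q * Z.of_nat N) * grid N i) = 0).
    { intros i. replace (q * Z.of_nat N)%Z with (q * Z.of_nat N + 0)%Z by ring.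
      destruct (trig_shift N h q 0 i Hh HN) as [H1 H2]. rewrite H1, H2. rewrite Rmult_0_l, cos_0, sin_0. split; reflexivity. }
    split.
    + rewrite (ps_ext _ (fun _ => 1)) by (intros; apply Ht). rewrite ps_const. ring.
    + rewrite (ps_ext _ (fun _ => 0)) by (intros; apply Ht). rewrite ps_const. ring.
  - set (b := IZR p * PI / INR N).
    assert (Hsb : sin b <> 0).
    { intros Hs. apply sin_eq_0_0 in Hs. destruct Hs as [z Hz]. apply E.
      apply Z.mod_divide; [lia|]. exists z. apply eq_IZR. rewrite mult_IZR, <- INR_IZR_INZ.
      unfold b in Hz. assert (HPI : PI <> 0) by (generalize PI_RGT_0; lra).
      apply (Rmult_eq_reg_r (PI / INR N)); [|apply Rmult_integral_contrapositive; split; [exact HPI|apply Rinv_neq_0_compat; exact HNR]].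
      transitivity (IZR p * PI / INR N); [field; exact HNR|]. rewrite Hz. field. exact HNR. }
    assert (Hstep : forall i, IZR p * grid N (S i) = IZR p * grid N i + 2 * b).
    { intros i. rewrite grid_S by exact HN. unfold b. field. exact HNR. }
    assert (HN' : IZR p * grid N N = IZR p * PI).
    { unfold grid. field_simplify; [|exact HNR]. field. }
    assert (H0 : IZR p * grid N 0 = - (IZR p * PI)).
    { unfold grid. simpl. ring. }
    assert (Hsp := sin_IZR_PI p).
    split.
    + assert (Ht := ps_tele (fun i => sin (IZR p * grid N i - b)) N).
      rewrite (ps_ext _ (fun i => (2 * sin b) * cos (IZR p * grid N i))) in Ht.
      * rewrite ps_scal, HN', H0 in Ht.
        replace (- (IZR p * PI) - b) with (- (IZR p * PI + b)) in Ht by ring.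
        rewrite sin_neg, sin_minus, sin_plus, Hsp in Ht.
        replace (0 * cos b - cos (IZR p * PI) * sin b - - (0 * cos b + cos (IZR p * PI) * sin b)) with 0 in Ht by ring.
        apply Rmult_integral in Ht. destruct Ht as [Ht|Ht]; [lra|]. rewrite Ht. ring.
      * intros i. rewrite Hstep. replace (IZR p * grid N i + 2 * b - b) with (IZR p * grid N i + b) by ring.
        rewrite sin_plus, sin_minus. ring.
    + assert (Ht := ps_tele (fun i => cos (IZR p * grid N i - b)) N).
      rewrite (ps_ext _ (fun i => (- 2 * sin b) * sin (IZR p * grid N i))) in Ht.
      * rewrite ps_scal, HN', H0 in Ht.
        replace (- (IZR p * PI) - b) with (- (IZR p * PI + b)) in Ht by ring.
        rewrite cos_neg, cos_minus, cos_plus, Hsp in Ht.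
        replace (cos (IZR p * PI) * cos b + 0 * sin b - (cos (IZR p * PI) * cos b - 0 * sin b)) with 0 in Ht by ring.
        apply Rmult_integral in Ht. destruct Ht as [Ht|Ht]; [lra|]. exact Ht.
      * intros i. rewrite Hstep. replace (IZR p * grid N i + 2 * b - b) with (IZR p * grid N i + b) by ring.
        rewrite cos_plus, cos_minus. ring.
Qed.

Lemma zsummable_zero : zsummable (fun _ => 0).
Proof.
  split; exists (Rabs 0); apply (is_series_single (fun _ => Rabs 0) 0%nat); intros; rewrite Rabs_R0; reflexivity.
Qed.

Lemma ps_zsummable (F : nat -> Z -> R) n : (forall i, zsummable (F i)) -> zsummable (fun k => ps (fun i => F i k) n).
Proof.
  intros H. induction n; simpl; [apply zsummable_zero|]. apply zsummable_plus; auto.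
Qed.

Lemma ps_zsum (F : nat -> Z -> R) n : (forall i, zsummable (F i)) ->
  ps (fun i => zsumR (F i)) n = zsumR (fun k => ps (fun i => F i k) n).
Proof.
  intros H. induction n.
  - simpl. symmetry. apply zsumR_zero.
  - simpl. rewrite IHn. rewrite zsumR_plus; [reflexivity| |apply H].
    apply ps_zsummable; auto.
Qed.

Definition Gr (g : R -> R) (M : R) (k : Z) : R := fst (Gcoef g M k).
Definition cl (g : R -> R) (M : R) (N l : nat) (k : Z) : R := ind N l k * Gr g M k.

Lemma Gc_eq g M (HGn : forall k, snd (Gcoef g M k) = 0 /\ 0 <= fst (Gcoef g M k)) k :
  Gcoef g M k = (Gr g M k, 0).
Proof. unfold Gr. rewrite <- (proj1 (HGn k)). apply surjective_pairing. Qed.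

Lemma Gr_nonneg g M (HGn : forall k, snd (Gcoef g M k) = 0 /\ 0 <= fst (Gcoef g M k)) k : 0 <= Gr g M k.
Proof. apply HGn. Qed.

Lemma Cmod_G g M (HGn : forall k, snd (Gcoef g M k) = 0 /\ 0 <= fst (Gcoef g M k)) k :
  Cmod (Gcoef g M k) = Gr g M k.
Proof.
  rewrite (Gc_eq g M HGn k). unfold Cmod. simpl.
  replace (Gr g M k * (Gr g M k * 1) + 0 * (0 * 1)) with (Rsqr (Gr g M k)) by (unfold Rsqr; ring).
  apply sqrt_Rsqr. apply Gr_nonneg; auto.
Qed.

Lemma cl_summable g M N l (HGs : zsummable (fun k => fst (Gcoef g M k))) : zsummable (cl g M N l).
Proof. apply zsummable_le with (2 := zsummable_abs _ HGs). intros k. apply ind_abs. Qed.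

Lemma cl_nonneg g M N l (HGn : forall k, snd (Gcoef g M k) = 0 /\ 0 <= fst (Gcoef g M k)) k : 0 <= cl g M N l k.
Proof. unfold cl. apply Rmult_le_pos; [apply ind_nonneg|apply HGn]. Qed.

Lemma G1_eq g M N l (HGn : forall k, snd (Gcoef g M k) = 0 /\ 0 <= fst (Gcoef g M k))
  (HGs : zsummable (fun k => fst (Gcoef g M k))) : (0 < N)%nat -> (l < N)%nat ->
  G1 g M N l = zsumR (cl g M N l).
Proof.
  intros HN Hl. unfold G1.
  rewrite (zsumR_ext _ (fun m => Gr g M (m * Z.of_nat N + Z.of_nat l)%Z)) by (intros; apply Cmod_G; auto).
  apply zreindex; auto.
Qed.

Lemma psi_eq g M N l (HGn : forall k, snd (Gcoef g M k) = 0 /\ 0 <= fst (Gcoef g M k))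
  (HGs : zsummable (fun k => fst (Gcoef g M k))) : (0 < N)%nat -> (l < N)%nat -> forall x,
  psi g M N l x = (/ sqrt (G1 g M N l) * Tr (cl g M N l) x, / sqrt (G1 g M N l) * Ti (cl g M N l) x).
Proof.
  intros HN Hl x. unfold psi, zsumC.
  assert (E1 : zsumR (fun k => fst (Cmult (Gcoef g M (k * Z.of_nat N + Z.of_nat l)%Z) (phi (k * Z.of_nat N + Z.of_nat l)%Z x)))
     = Tr (cl g M N l) x).
  { transitivity (zsumR (fun m => (fun k => Gr g M k * cos (IZR k * x)) (m * Z.of_nat N + Z.of_nat l)%Z)).
    - apply zsumR_ext. intros m. rewrite Gc_eq by auto. unfold phi. simpl. ring.
    - etransitivity; [apply (zreindex N l (fun k => Gr g M k * cos (IZR k * x)) HN Hl)|].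
      + apply zsummable_le with (2 := zsummable_abs _ HGs). intros; apply abs_mul_le1, Rabs_cos_le.
      + unfold Tr, cl. apply zsumR_ext. intros; ring. }
  assert (E2 : zsumR (fun k => snd (Cmult (Gcoef g M (k * Z.of_nat N + Z.of_nat l)%Z) (phi (k * Z.of_nat N + Z.of_nat l)%Z x)))
     = Ti (cl g M N l) x).
  { transitivity (zsumR (fun m => (fun k => Gr g M k * sin (IZR k * x)) (m * Z.of_nat N + Z.of_nat l)%Z)).
    - apply zsumR_ext. intros m. rewrite Gc_eq by auto. unfold phi. simpl. ring.
    - etransitivity; [apply (zreindex N l (fun k => Gr g M k * sin (IZR k * x)) HN Hl)|].
      + apply zsummable_le with (2 := zsummable_abs _ HGs). intros; apply abs_mul_le1, Rabs_sin_le.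
      + unfold Ti, cl. apply zsumR_ext. intros; ring. }
  rewrite E1, E2. unfold Cmult, RtoC. simpl. f_equal; ring.
Qed.

Lemma kern_decomp g M (HGn : forall k, snd (Gcoef g M k) = 0 /\ 0 <= fst (Gcoef g M k))
  (HK : forall x x', RtoC (Kern g M x x') =
       zsumC (fun k => Cmult (Gcoef g M k) (Cmult (phi k x) (Cconj (phi k x'))))) x y :
  Kern g M x y = zsumR (fun k => Gr g M k * cos (IZR k * x - IZR k * y)) /\
  0 = zsumR (fun k => Gr g M k * sin (IZR k * x - IZR k * y)).
Proof.
  pose proof (HK x y) as H. split.
  - apply (f_equal fst) in H. cbn [fst snd RtoC zsumC] in H. rewrite H.
    apply zsumR_ext. intros k. rewrite Gc_eq by auto. unfold phi, Cmult, Cconj. simpl. rewrite cos_minus. ring.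
  - apply (f_equal snd) in H. cbn [fst snd RtoC zsumC] in H. rewrite H.
    apply zsumR_ext. intros k. rewrite Gc_eq by auto. unfold phi, Cmult, Cconj. simpl. rewrite sin_minus. ring.
Qed.

Lemma trig_id1 G a kk ll y :
  G * cos (a - kk * y) * cos (ll * y) - G * sin (a - kk * y) * sin (ll * y) =
  G * cos a * cos ((kk - ll) * y) + G * sin a * sin ((kk - ll) * y).
Proof.
  assert (E : cos (a - kk * y) * cos (ll * y) - sin (a - kk * y) * sin (ll * y) = cos (a - (kk - ll) * y)).
  { rewrite <- cos_plus. f_equal. ring. }
  rewrite (cos_minus a ((kk - ll) * y)) in E.
  transitivity (G * (cos (a - kk * y) * cos (ll * y) - sin (a - kk * y) * sin (ll * y))); [ring|].
  rewrite E. ring.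
Qed.

Lemma trig_id2 G a kk ll y :
  G * cos (a - kk * y) * sin (ll * y) + G * sin (a - kk * y) * cos (ll * y) =
  G * sin a * cos ((kk - ll) * y) - G * cos a * sin ((kk - ll) * y).
Proof.
  assert (E : sin (a - kk * y) * cos (ll * y) + cos (a - kk * y) * sin (ll * y) = sin (a - (kk - ll) * y)).
  { rewrite <- sin_plus. f_equal. ring. }
  rewrite (sin_minus a ((kk - ll) * y)) in E.
  transitivity (G * (sin (a - kk * y) * cos (ll * y) + cos (a - kk * y) * sin (ll * y))); [ring|].
  rewrite E. ring.
Qed.

Lemma kernel_action g M (HGn : forall k, snd (Gcoef g M k) = 0 /\ 0 <= fst (Gcoef g M k))
  (HGs : zsummable (fun k => fst (Gcoef g M k)))
  (HK : forall x x', RtoC (Kern g M x x') =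
       zsumC (fun k => Cmult (Gcoef g M k) (Cmult (phi k x) (Cconj (phi k x')))))
  (N h l : nat) : N = (2 * h)%nat -> (0 < N)%nat -> (l < N)%nat -> forall x,
  ps (fun i => Kern g M x (grid N i) * cos (IZR (Z.of_nat l) * grid N i)) N = INR N * Tr (cl g M N l) x /\
  ps (fun i => Kern g M x (grid N i) * sin (IZR (Z.of_nat l) * grid N i)) N = INR N * Ti (cl g M N l) x.
Proof.
  intros Hh HN Hl x.
  set (L := IZR (Z.of_nat l)).
  set (F := fun i k => Gr g M k * cos (IZR k * x - IZR k * grid N i)).
  set (S := fun i k => Gr g M k * sin (IZR k * x - IZR k * grid N i)).
  assert (HF : forall i, zsummable (F i)).
  { intros i. apply zsummable_le with (2 := zsummable_abs _ HGs). intros; apply abs_mul_le1, Rabs_cos_le. }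
  assert (HS : forall i, zsummable (S i)).
  { intros i. apply zsummable_le with (2 := zsummable_abs _ HGs). intros; apply abs_mul_le1, Rabs_sin_le. }
  assert (HKi : forall i, Kern g M x (grid N i) = zsumR (F i) /\ 0 = zsumR (S i)).
  { intros i. apply kern_decomp; auto. }
  assert (Hsc : forall i c, zsummable (fun k => F i k * c)).
  { intros i c. apply zsummable_le with (b := fun k => Rabs c * Rabs (F i k)); [|apply zsummable_scal, zsummable_abs; auto].
    intros k. rewrite Rabs_mult. rewrite Rmult_comm. lra. }
  assert (Hss : forall i c, zsummable (fun k => S i k * c)).
  { intros i c. apply zsummable_le with (b := fun k => Rabs c * Rabs (S i k)); [|apply zsummable_scal, zsummable_abs; auto].
    intros k. rewrite Rabs_mult. rewrite Rmult_comm. lra. }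
  assert (Hcs : forall k i, Rabs (cos (IZR k * x) * cos ((IZR k - L) * grid N i) + sin (IZR k * x) * sin ((IZR k - L) * grid N i)) <= 1).
  { intros k i. rewrite <- cos_minus. apply Rabs_cos_le. }
  assert (Hsn : forall k i, Rabs (sin (IZR k * x) * cos ((IZR k - L) * grid N i) - cos (IZR k * x) * sin ((IZR k - L) * grid N i)) <= 1).
  { intros k i. rewrite <- sin_minus. apply Rabs_sin_le. }
  split.
  - rewrite (ps_ext _ (fun i => zsumR (fun k => F i k * cos (L * grid N i) - S i k * sin (L * grid N i)))).
    + rewrite ps_zsum.
      * unfold Tr. rewrite <- zsumR_scal. apply zsumR_ext. intros k.
        rewrite (ps_ext _ (fun i => Gr g M k * cos (IZR k * x) * cos (IZR (k - Z.of_nat l) * grid N i)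
                                 + Gr g M k * sin (IZR k * x) * sin (IZR (k - Z.of_nat l) * grid N i))).
        -- rewrite ps_plus, !ps_scal. destruct (grid_sums N h (k - Z.of_nat l) Hh HN) as [C1 C2].
           rewrite C1, C2. unfold cl, ind. ring.
        -- intros i. unfold F, S, L. rewrite minus_IZR. apply trig_id1.
      * intros i. apply zsummable_le with (b := fun k => Rabs (Gr g M k)); [|apply zsummable_abs; auto].
        intros k. unfold F, S. rewrite trig_id1. rewrite !Rmult_assoc, <- Rmult_plus_distr_l.
        apply abs_mul_le1. apply Hcs.
    + intros i. destruct (HKi i) as [E1 E2]. rewrite E1. rewrite zsumR_minus; [|apply Hsc|apply Hss].
      rewrite !zsumR_mulr. rewrite <- E2. ring.
  - rewrite (ps_ext _ (fun i => zsumR (fun k => F i k * sin (L * grid N i) + S i k * cos (L * grid N i)))).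
    + rewrite ps_zsum.
      * unfold Ti. rewrite <- zsumR_scal. apply zsumR_ext. intros k.
        rewrite (ps_ext _ (fun i => Gr g M k * sin (IZR k * x) * cos (IZR (k - Z.of_nat l) * grid N i)
                                 + (- (Gr g M k * cos (IZR k * x))) * sin (IZR (k - Z.of_nat l) * grid N i))).
        -- rewrite ps_plus, !ps_scal. destruct (grid_sums N h (k - Z.of_nat l) Hh HN) as [C1 C2].
           rewrite C1, C2. unfold cl, ind. ring.
        -- intros i. unfold F, S, L. rewrite minus_IZR. rewrite trig_id2. ring.
      * intros i. apply zsummable_le with (b := fun k => Rabs (Gr g M k)); [|apply zsummable_abs; auto].
        intros k. unfold F, S. rewrite trig_id2.
        match goal with |- Rabs ?e <= _ => replace e with (Gr g M k * (sin (IZR k * x) * cos ((IZR k - L) * grid N i) - cos (IZR k * x) * sin ((IZR k - L) * grid N i))) by ring end.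
        apply abs_mul_le1, Hsn.
    + intros i. destruct (HKi i) as [E1 E2]. rewrite E1. rewrite zsumR_plus; [|apply Hsc|apply Hss].
      rewrite !zsumR_mulr. rewrite <- E2. ring.
Qed.

Lemma RInt_of (f h : R -> R) a b v : is_RInt f a b v -> (forall x, h x = f x) -> RInt h a b = v.
Proof.
  intros H E. replace h with f; [apply is_RInt_unique; exact H|].
  apply functional_extensionality. intros; symmetry; apply E.
Qed.

Lemma PI_neq0 : PI <> 0.
Proof. generalize PI_RGT_0. lra. Qed.

Lemma ip_psi_phi g M N l (HGn : forall k, snd (Gcoef g M k) = 0 /\ 0 <= fst (Gcoef g M k))
  (HGs : zsummable (fun k => fst (Gcoef g M k))) : (0 < N)%nat -> (l < N)%nat -> forall k,
  ip (psi g M N l) (phi k) = RtoC (/ sqrt (G1 g M N l) * cl g M N l k).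
Proof.
  intros HN Hl k. set (s := / sqrt (G1 g M N l)). set (c := cl g M N l).
  assert (Hc : zsummable c) by (apply cl_summable; auto).
  unfold ip, CInt.
  rewrite (RInt_of (fun t => s * (Tr c t * cos (IZR k * t) + Ti c t * sin (IZR k * t))) _ _ _ (s * (2 * PI * c k))).
  - rewrite (RInt_of (fun t => s * (Ti c t * cos (IZR k * t) - Tr c t * sin (IZR k * t))) _ _ _ (s * 0)).
    + unfold Cmult, RtoC. simpl. f_equal; field; apply PI_neq0.
    + apply is_RInt_scalR. apply K2; auto.
    + intros t. rewrite (psi_eq g M N l HGn HGs HN Hl t). unfold phi, Cmult, Cconj. simpl. fold s c. ring.
  - apply is_RInt_scalR. apply K1; auto.
  - intros t. rewrite (psi_eq g M N l HGn HGs HN Hl t). unfold phi, Cmult, Cconj. simpl. fold s c. ring.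
Qed.

Lemma ip_psi_psi g M N l l' (HGn : forall k, snd (Gcoef g M k) = 0 /\ 0 <= fst (Gcoef g M k))
  (HGs : zsummable (fun k => fst (Gcoef g M k))) : (0 < N)%nat -> (l < N)%nat -> (l' < N)%nat ->
  ip (psi g M N l) (psi g M N l') =
  RtoC (/ sqrt (G1 g M N l) * / sqrt (G1 g M N l') * zsumR (fun j => cl g M N l j * cl g M N l' j)).
Proof.
  intros HN Hl Hl'. set (s := / sqrt (G1 g M N l)). set (c := cl g M N l).
  set (s' := / sqrt (G1 g M N l')). set (d := cl g M N l').
  assert (Hc : zsummable c) by (apply cl_summable; auto).
  assert (Hd : zsummable d) by (apply cl_summable; auto).
  unfold ip, CInt.
  rewrite (RInt_of (fun t => s * s' * (Tr c t * Tr d t + Ti c t * Ti d t)) _ _ _ (s * s' * (2 * PI * zsumR (fun j => c j * d j)))).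
  - rewrite (RInt_of (fun t => s * s' * (Ti c t * Tr d t - Tr c t * Ti d t)) _ _ _ (s * s' * 0)).
    + unfold Cmult, RtoC. simpl. f_equal; field; apply PI_neq0.
    + apply is_RInt_scalR. apply K4; auto.
    + intros t. rewrite (psi_eq g M N l HGn HGs HN Hl t), (psi_eq g M N l' HGn HGs HN Hl' t).
      unfold Cmult, Cconj. simpl. fold s c s' d. ring.
  - apply is_RInt_scalR. apply K3; auto.
  - intros t. rewrite (psi_eq g M N l HGn HGs HN Hl t), (psi_eq g M N l' HGn HGs HN Hl' t).
    unfold Cmult, Cconj. simpl. fold s c s' d. ring.
Qed.

Lemma inv_sqrt_sq G : 0 < G -> / sqrt G * / sqrt G = / G.
Proof.
  intros H. rewrite <- Rinv_mult. rewrite sqrt_sqrt by lra. reflexivity.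
Qed.

Lemma rkhs_one g M N l (HGn : forall k, snd (Gcoef g M k) = 0 /\ 0 <= fst (Gcoef g M k))
  (HGs : zsummable (fun k => fst (Gcoef g M k))) : (0 < N)%nat -> (l < N)%nat ->
  0 < G1 g M N l -> rkhs_norm g M (psi g M N l) = 1.
Proof.
  intros HN Hl Hpos. unfold rkhs_norm.
  rewrite (zsumR_ext _ (fun k => / G1 g M N l * cl g M N l k)).
  - rewrite zsumR_scal. rewrite <- G1_eq by auto. rewrite Rinv_l by lra. apply sqrt_1.
  - intros k. rewrite ip_psi_phi by auto. rewrite Cmod_R, pow2_abs.
    assert (Hs := inv_sqrt_sq _ Hpos).
    change (fst (Gcoef g M k)) with (Gr g M k). unfold cl.
    destruct (Req_dec (Gr g M k) 0) as [E|E].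
    + rewrite E. unfold Rdiv. ring.
    + destruct (ind_01 N l k) as [I|I]; rewrite I.
      * unfold Rdiv. ring.
      * transitivity ((/ sqrt (G1 g M N l) * / sqrt (G1 g M N l)) * Gr g M k).
        { assert (sqrt (G1 g M N l) <> 0) by (apply Rgt_not_eq, sqrt_lt_R0; exact Hpos).
          field. split; assumption. }
        rewrite Hs. ring.
Qed.

Lemma orth g M N l l' (HGn : forall k, snd (Gcoef g M k) = 0 /\ 0 <= fst (Gcoef g M k))
  (HGs : zsummable (fun k => fst (Gcoef g M k))) : (0 < N)%nat -> (l < N)%nat -> (l' < N)%nat -> l' <> l ->
  ip (psi g M N l) (psi g M N l') = RtoC 0.
Proof.
  intros HN Hl Hl' Hne. rewrite ip_psi_psi by auto.
  rewrite (zsumR_ext _ (fun _ => 0)).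
  - rewrite zsumR_zero. rewrite Rmult_0_r. reflexivity.
  - intros j. unfold cl.
    destruct (ind_01 N l j) as [I|I]; [rewrite I; ring|].
    destruct (ind_01 N l' j) as [I'|I']; [rewrite I'; ring|].
    exfalso. destruct (ind_inv N l j HN ltac:(lra)) as [m Hm].
    destruct (ind_inv N l' j HN ltac:(lra)) as [m' Hm'].
    rewrite Hm in Hm'. destruct (Z.lt_trichotomy m m') as [H|[H|H]]; [nia|subst; lia|nia].
Qed.

Lemma L2_eq g M N l (HGn : forall k, snd (Gcoef g M k) = 0 /\ 0 <= fst (Gcoef g M k))
  (HGs : zsummable (fun k => fst (Gcoef g M k))) : (0 < N)%nat -> (l < N)%nat ->
  0 < G1 g M N l -> L2norm (psi g M N l) = G2 g M N l / sqrt (G1 g M N l).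
Proof.
  intros HN Hl Hpos. unfold L2norm, G2. rewrite ip_psi_psi by auto. simpl fst.
  destruct (zsummable_bound _ HGs) as [B HB].
  assert (Hsq : zsummable (fun k => Gr g M k ^ 2)).
  { apply zsummable_le with (b := fun k => B * Rabs (Gr g M k)); [|apply zsummable_scal, zsummable_abs; auto].
    intros k. rewrite <- RPow_abs. simpl. rewrite Rmult_1_r.
    generalize (HB k) (Rabs_pos (Gr g M k)). unfold Gr. nra. }
  rewrite (zsumR_ext (fun m => Cmod _ ^ 2) (fun m => Gr g M (m * Z.of_nat N + Z.of_nat l)%Z ^ 2))
    by (intros; rewrite Cmod_G; auto).
  rewrite (zreindex N l (fun k => Gr g M k ^ 2) HN Hl Hsq).
  rewrite (zsumR_ext (fun j => cl g M N l j * cl g M N l j) (fun k => ind N l k * Gr g M k ^ 2)).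
  - rewrite sqrt_mult_alt.
    + rewrite sqrt_square. unfold Rdiv. ring.
      apply Rlt_le, Rinv_0_lt_compat, sqrt_lt_R0; exact Hpos.
    + apply Rmult_le_pos; apply Rlt_le, Rinv_0_lt_compat, sqrt_lt_R0; exact Hpos.
  - intros k. unfold cl. rewrite <- (ind_sq N l k) at 3. ring.
Qed.

Lemma Tr_grid g M N h l (HGn : forall k, snd (Gcoef g M k) = 0 /\ 0 <= fst (Gcoef g M k))
  (HGs : zsummable (fun k => fst (Gcoef g M k))) : N = (2 * h)%nat -> (0 < N)%nat -> (l < N)%nat -> forall i,
  Tr (cl g M N l) (grid N i) = G1 g M N l * cos (IZR (Z.of_nat l) * grid N i) /\
  Ti (cl g M N l) (grid N i) = G1 g M N l * sin (IZR (Z.of_nat l) * grid N i).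
Proof.
  intros Hh HN Hl i. rewrite G1_eq by auto. rewrite <- !zsumR_mulr. unfold Tr, Ti.
  split; apply zsumR_ext; intros k; unfold cl;
    (destruct (ind_01 N l k) as [I|I]; rewrite I; [ring|]);
    destruct (ind_inv N l k HN ltac:(lra)) as [m ->];
    destruct (trig_shift N h m (Z.of_nat l) i Hh HN) as [C S]; rewrite ?C, ?S; ring.
Qed.

Lemma eigen_ps g M N h l (HGn : forall k, snd (Gcoef g M k) = 0 /\ 0 <= fst (Gcoef g M k))
  (HGs : zsummable (fun k => fst (Gcoef g M k)))
  (HK : forall x x', RtoC (Kern g M x x') =
       zsumC (fun k => Cmult (Gcoef g M k) (Cmult (phi k x) (Cconj (phi k x'))))) :
  N = (2 * h)%nat -> (0 < N)%nat -> (l < N)%nat -> forall x,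
  ps (fun i => fst (Cmult (RtoC (Kern g M x (grid N i))) (psi g M N l (grid N i)))) N
    = INR N * (G1 g M N l * fst (psi g M N l x)) /\
  ps (fun i => snd (Cmult (RtoC (Kern g M x (grid N i))) (psi g M N l (grid N i)))) N
    = INR N * (G1 g M N l * snd (psi g M N l x)).
Proof.
  intros Hh HN Hl x. set (s := / sqrt (G1 g M N l)).
  destruct (kernel_action g M HGn HGs HK N h l Hh HN Hl x) as [A1 A2].
  rewrite (psi_eq g M N l HGn HGs HN Hl x). cbn [fst snd].
  split.
  - rewrite (ps_ext _ (fun i => (s * G1 g M N l) * (Kern g M x (grid N i) * cos (IZR (Z.of_nat l) * grid N i)))).
    + rewrite ps_scal, A1. fold s. ring.
    + intros i. rewrite (psi_eq g M N l HGn HGs HN Hl (grid N i)).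
      destruct (Tr_grid g M N h l HGn HGs Hh HN Hl i) as [T1 T2]. rewrite T1, T2.
      unfold Cmult, RtoC. simpl. fold s. ring.
  - rewrite (ps_ext _ (fun i => (s * G1 g M N l) * (Kern g M x (grid N i) * sin (IZR (Z.of_nat l) * grid N i)))).
    + rewrite ps_scal, A2. fold s. ring.
    + intros i. rewrite (psi_eq g M N l HGn HGs HN Hl (grid N i)).
      destruct (Tr_grid g M N h l HGn HGs Hh HN Hl i) as [T1 T2]. rewrite T1, T2.
      unfold Cmult, RtoC. simpl. fold s. ring.
Qed.

From HB Require Import structures.
From mathcomp Require Import all_boot all_algebra.
From mathcomp Require Import Rstruct.
Open Scope R_scope.

Lemma CplusA : associative Cplus. Proof. intros x y z. apply Cplus_assoc. Qed.
Lemma Cplus0l : left_id (RtoC 0) Cplus. Proof. intros x. apply Cplus_0_l. Qed.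
Lemma Cplus0r : right_id (RtoC 0) Cplus. Proof. intros x. apply Cplus_0_r. Qed.
HB.instance Definition _ := Monoid.isLaw.Build C (RtoC 0) Cplus CplusA Cplus0l Cplus0r.
Lemma big_fst (H : nat -> C) n :
  fst (\big[Cplus/RtoC 0]_(i < n) H i) = ps (fun i => fst (H i)) n /\
  snd (\big[Cplus/RtoC 0]_(i < n) H i) = ps (fun i => snd (H i)) n.
Proof.
  elim: n => [|n [IH1 IH2]].
  - rewrite big_ord0. simpl. split; reflexivity.
  - rewrite big_ord_recr /=. rewrite IH1 IH2. split; reflexivity.
Qed.

Lemma sumR_ps (F : nat -> R) n : (\sum_(i < n) F i)%R = ps F n.
Proof.
  elim: n => [|n IH].
  - rewrite big_ord0. reflexivity.
  - rewrite big_ord_recr /=. rewrite IH. reflexivity.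
Qed.

Lemma G1_pos g M N h l (HGn : forall k, snd (Gcoef g M k) = 0 /\ 0 <= fst (Gcoef g M k))
  (HGs : zsummable (fun k => fst (Gcoef g M k)))
  (HK : forall x x', RtoC (Kern g M x x') =
       zsumC (fun k => Cmult (Gcoef g M k) (Cmult (phi k x) (Cconj (phi k x')))))
  (Hinv : kmat g M N \in unitmx) :
  N = (2 * h)%coq_nat -> (0 < N)%coq_nat -> (l < N)%coq_nat -> 0 < G1 g M N l.
Proof.
  move=> Hh HN Hl.
  have G1nn : 0 <= G1 g M N l.
  { rewrite (G1_eq g M N l HGn HGs HN Hl). apply zsumR_nonneg; [apply cl_nonneg; auto| apply cl_summable; auto]. }
  destruct (Rle_lt_or_eq_dec _ _ G1nn) as [Hp|H0]; [exact Hp|exfalso].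
  have key : forall (f : R -> R), (forall i, ps (fun j => Kern g M (grid N i) (grid N j) * f (IZR (Z.of_nat l) * grid N j)) N = 0) ->
     f (IZR (Z.of_nat l) * grid N 0) = 0.
  { move=> f Hf.
    set u : 'cV[R]_N := (\col_(j < N) f (IZR (Z.of_nat l) * grid N j))%R.
    have Hu : (kmat g M N *m u = 0)%R.
    { apply/matrixP => i j. rewrite !mxE.
      rewrite (eq_bigr (fun k : 'I_N => Kern g M (grid N i) (grid N k) * f (IZR (Z.of_nat l) * grid N k))).
      - rewrite (sumR_ps (fun k => Kern g M (grid N i) (grid N k) * f (IZR (Z.of_nat l) * grid N k))).
        apply Hf.
      - move=> k _. rewrite !mxE. reflexivity. }
    have Hu0 : u = 0%R.
    { rewrite -(mulKmx Hinv u) Hu. apply mulmx0. }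
    have Ord : (0 < N)%N by apply/ltP.
    have := congr1 (fun A : 'cV[R]_N => A (Ordinal Ord) ord0) Hu0.
    rewrite /u !mxE. simpl. move=> ->. reflexivity. }
  have Hc : cos (IZR (Z.of_nat l) * grid N 0) = 0.
  { apply key. move=> i. destruct (kernel_action g M HGn HGs HK N h l Hh HN Hl (grid N i)) as [A1 A2].
    rewrite A1. destruct (Tr_grid g M N h l HGn HGs Hh HN Hl i) as [T1 T2]. rewrite T1 -H0. ring. }
  have Hs : sin (IZR (Z.of_nat l) * grid N 0) = 0.
  { apply key. move=> i. destruct (kernel_action g M HGn HGs HK N h l Hh HN Hl (grid N i)) as [A1 A2].
    rewrite A2. destruct (Tr_grid g M N h l HGn HGs Hh HN Hl i) as [T1 T2]. rewrite T2 -H0. ring. }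
  have := sin2_cos2 (IZR (Z.of_nat l) * grid N 0). rewrite Hc Hs /Rsqr. lra.
Qed.

Theorem lemma8 (g : R -> R) (M : R) (N : nat)
  (Hg_even : forall x, g (- x) = g x)
  (HM : 0 < M)
  (Hg_int : ex_RInt (fun t => g (M * t)) (- PI) PI)
  (Hpd : pos_def (Kern g M))
  (HG_nonneg : forall k, snd (Gcoef g M k) = 0 /\ 0 <= fst (Gcoef g M k))
  (HG_sum : zsummable (fun k => fst (Gcoef g M k)))
  (HK_rkhs : forall x x', RtoC (Kern g M x x') =
       zsumC (fun k => Cmult (Gcoef g M k) (Cmult (phi k x) (Cconj (phi k x')))))
  (HN_even : Nat.Even N)
  (Hinv : kmat g M N \in unitmx) :
  forall l : nat, (l < N)%nat ->
    (forall x, TKN g M N (psi g M N l) x = Cmult (RtoC (G1 g M N l)) (psi g M N l x))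
    /\ rkhs_norm g M (psi g M N l) = 1
    /\ L2norm (psi g M N l) = G2 g M N l / sqrt (G1 g M N l)
    /\ (forall k : nat, (k < N)%nat -> k <> l -> ip (psi g M N l) (psi g M N k) = RtoC 0).
Proof.
  move=> l Hl.
  have Hl' : (l < N)%coq_nat by apply/ltP.
  have HN : (0 < N)%coq_nat by lia.
  destruct HN_even as [h Hh].
  have Hpos := G1_pos g M N h l HG_nonneg HG_sum HK_rkhs Hinv Hh HN Hl'.
  split; [|split; [|split]].
  - move=> x. rewrite /TKN.
    destruct (big_fst (fun i => Cmult (RtoC (Kern g M x (grid N i))) (psi g M N l (grid N i))) N) as [B1 B2].
    destruct (eigen_ps g M N h l HG_nonneg HG_sum HK_rkhs Hh HN Hl' x) as [E1 E2].
    have HNR : INR N <> 0 by apply not_0_INR; lia.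
    apply injective_projections; rewrite /Cmult /RtoC; cbn [fst snd].
    + rewrite B1 E1. field. exact HNR.
    + rewrite B1 B2 E2. field. exact HNR.
  - apply rkhs_one; auto.
  - apply L2_eq; auto.
  - move=> k Hk Hkl. apply orth; auto. by apply/ltP.
Qed.
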